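(* Let $s\in(0,1)$, let $\Omega\subset\mathbb{R}^N$ be a bounded open set of class $C^{1,1}$, and let $X\in C^0(\overline\Omega;\mathbb{R}^N)$. Let $u\in C^s(\overline\Omega)\cap C^1(\Omega)$ with $u=0$ on $\mathbb{R}^N\setminus\Omega$, such that $\psi:=u/\delta^s$ satisfies, for some $\alpha\in(0,1)$ and $c>0$: - $\|\psi\|_{C^\alpha(\overline\Omega)}\le c$; - $|\nabla\psi(x)|\le c\,\delta(x)^{\alpha-1}$ for all $x\in\Omega$. Let $U_k:=u\,(\zeta_k\circ\delta)$ and $g^0_k:=\nabla U_k\cdot X$. Then there is a constant $C>0$ such that $$k^{s-1}\big|g^0_k(\Psi(\sigma,r/k))\big|\le C(r^{s-1}+r^{s-1+\alpha})$$ for all $k\in\mathbb{N}$, $\sigma\in\partial\Omega$ and $0<r<k\varepsilon_\Omega$. Moreover, $$\lim_{k\to\infty}k^{s-1}g^0_k(\Psi(\sigma,r/k))=h'(r)\,\psi(\sigma)\,X(\sigma)\cdot\nu(\sigma)$$ for every $\sigma\in\partial\Omega$ and $r>0$.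
   Context: $\delta\in C^{1,1}(\mathbb{R}^N)$ is a fixed function equal to the signed distance $\mathrm{dist}(\cdot,\mathbb{R}^N\setminus\Omega)-\mathrm{dist}(\cdot,\Omega)$ near $\partial\Omega$, positive in $\Omega$, negative in $\mathbb{R}^N\setminus\overline\Omega$. $\nu$ is the interior unit normal on $\partial\Omega$, and $\psi$ on $\partial\Omega$ is its continuous extension. $\varepsilon_\Omega>0$ is fixed so that $\Psi:\partial\Omega\times(-\varepsilon_\Omega,\varepsilon_\Omega)\to\{x:|\delta(x)|<\varepsilon_\Omega\}$, $\Psi(\sigma,r)=\sigma+r\nu(\sigma)$, is a bi-Lipschitz bijection with $\delta(\Psi(\sigma,r))=r$. Fix $\rho\in C^\infty_c((-2,2))$ with $0\le\rho\le1$ and $\rho\equiv1$ on $(-1,1)$. Put $\zeta=1-\rho$, $\rho_k(t)=\rho(kt)$, $\zeta_k=1-\rho_k$, and $h(r)=r_+^s\zeta(r)$. *)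

(* Defs.v *)
From Stdlib Require Import Reals Lra Lia.
Open Scope R_scope.

(* Points of R^N are represented by  nat -> R ; only coordinates 0..N-1
   matter: every notion below (dot, norm, dist) only reads these. *)
Definition vec := nat -> R.

Fixpoint sumN (n : nat) (f : nat -> R) : R :=
  match n with O => 0 | S m => sumN m f + f m end.

Definition dot (N : nat) (x y : vec) : R := sumN N (fun i => x i * y i).
Definition vnorm (N : nat) (x : vec) : R := sqrt (dot N x x).
Definition vsub (x y : vec) : vec := fun i => x i - y i.
Definition vadd (x y : vec) : vec := fun i => x i + y i.
Definition vscal (a : R) (x : vec) : vec := fun i => a * x i.
Definition vdist (N : nat) (x y : vec) : R := vnorm N (vsub x y).

(* x^a for x > 0, and 0 for x <= 0 (used with a > 0: Hoelder moduli, r_+^s) *)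
Definition ppow (x a : R) : R := if Rlt_dec 0 x then Rpower x a else 0.

Definition Frechet (N : nat) (f : vec -> R) (x g : vec) : Prop :=
  forall eps, 0 < eps -> exists d, 0 < d /\ forall y, vdist N y x < d ->
    Rabs (f y - f x - dot N g (vsub y x)) <= eps * vdist N y x.

Definition C11 (n : nat) (f : vec -> R) : Prop :=
  exists (Df : vec -> vec) (L : R),
    (forall x, Frechet n f x (Df x)) /\
    (forall x y, vnorm n (vsub (Df x) (Df y)) <= L * vdist n x y).

Definition is_open (N : nat) (O : vec -> Prop) : Prop :=
  forall x, O x -> exists r, 0 < r /\ forall y, vdist N y x < r -> O y.
Definition is_bounded (N : nat) (O : vec -> Prop) : Prop :=
  exists M, forall x, O x -> vnorm N x <= M.
Definition closure (N : nat) (O : vec -> Prop) (x : vec) : Prop :=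
  forall eps, 0 < eps -> exists y, O y /\ vdist N x y < eps.
Definition boundary (N : nat) (O : vec -> Prop) (x : vec) : Prop :=
  closure N O x /\ ~ O x.

(* Bounded open set of class C^{1,1}: near every boundary point, in suitable
   orthonormal coordinates e_0..e_{N-1}, Omega is the supergraph of a
   C^{1,1} function of the first N-1 coordinates. *)
Definition C11_domain (N : nat) (O : vec -> Prop) : Prop :=
  forall x0, boundary N O x0 ->
    exists (e : nat -> vec) (r : R) (gam : vec -> R),
      0 < r /\
      (forall i j, (i < N)%nat -> (j < N)%nat ->
         dot N (e i) (e j) = if Nat.eqb i j then 1 else 0) /\
      C11 (N - 1) gam /\
      forall x, vdist N x x0 < r ->
        (O x <-> gam (fun i => dot N (vsub x x0) (e i))
                    < dot N (vsub x x0) (e (N - 1)%nat)).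

Definition IsInfDist (N : nat) (A : vec -> Prop) (x : vec) (d : R) : Prop :=
  (forall y, A y -> d <= vdist N x y) /\
  (forall e, 0 < e -> exists y, A y /\ vdist N x y < d + e).

Definition contv_on (N : nat) (S : vec -> Prop) (F : vec -> vec) : Prop :=
  forall x, S x -> forall eps, 0 < eps -> exists d, 0 < d /\
    forall y, S y -> vdist N y x < d -> vdist N (F y) (F x) < eps.

Definition smooth (f : R -> R) : Prop :=
  exists D : nat -> R -> R, (forall x, D O x = f x) /\
    forall n x, derivable_pt_lim (D n) x (D (S n) x).

Definition zeta (rho : R -> R) (t : R) : R := 1 - rho t.
Definition zetak (rho : R -> R) (k : nat) (t : R) : R := 1 - rho (INR k * t).
Definition hfun (s : R) (rho : R -> R) (r : R) : R := ppow r s * zeta rho r.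

Definition Psi (nu : vec -> vec) (sigma : vec) (r : R) : vec :=
  vadd sigma (vscal r (nu sigma)).

Definition Uk (rho : R -> R) (delta u : vec -> R) (k : nat) (x : vec) : R :=
  u x * zetak rho k (delta x).

(* Main.v *)
Require Import Defs.
From Stdlib Require Import Reals Lra Lia Psatz ZArith Classical FunctionalExtensionality IndefiniteDescription.
Open Scope R_scope.

Definition L1 (N : nat) (w : vec) : R := sumN N (fun i => Rabs (w i)).
Definition unitv (i : nat) : vec := fun j => if Nat.eqb j i then 1 else 0.

Lemma sumN_ext n f g : (forall i, (i < n)%nat -> f i = g i) -> sumN n f = sumN n g.
Proof. induction n; simpl; intros H; auto. rewrite IHn by (intros; apply H; lia). rewrite H by lia; auto. Qed.

Lemma sumN_plus n f g : sumN n (fun i => f i + g i) = sumN n f + sumN n g.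
Proof. induction n; simpl; [lra|rewrite IHn; lra]. Qed.

Lemma sumN_scal n c f : sumN n (fun i => c * f i) = c * sumN n f.
Proof. induction n; simpl; [lra|rewrite IHn; lra]. Qed.

Lemma sumN_le n f g : (forall i, (i < n)%nat -> f i <= g i) -> sumN n f <= sumN n g.
Proof. induction n; simpl; intros H; [lra|]. assert (H1 := H n (Nat.lt_succ_diag_r n)).
  assert (sumN n f <= sumN n g) by (apply IHn; intros; apply H; lia). lra. Qed.

Lemma sumN_nonneg n f : (forall i, (i < n)%nat -> 0 <= f i) -> 0 <= sumN n f.
Proof. intros H. replace 0 with (sumN n (fun _ => 0)). apply sumN_le; auto.
  induction n; simpl; auto. rewrite IHn; [lra|intros; apply H; lia]. Qed.

Lemma sumN_const n c : sumN n (fun _ => c) = INR n * c.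
Proof. induction n; cbn [sumN]; [simpl; lra|]. rewrite IHn, S_INR. lra. Qed.

Lemma sumN_abs n f : Rabs (sumN n f) <= sumN n (fun i => Rabs (f i)).
Proof. induction n; simpl. rewrite Rabs_R0; lra.
  eapply Rle_trans; [apply Rabs_triang|]. lra. Qed.

Lemma sumN_term_le n f i : (forall j, (j < n)%nat -> 0 <= f j) -> (i < n)%nat -> f i <= sumN n f.
Proof. induction n; simpl; intros H Hi; [lia|].
  assert (0 <= sumN n f) by (apply sumN_nonneg; intros; apply H; lia).
  destruct (Nat.eq_dec i n). subst; lra.
  assert (f i <= sumN n f) by (apply IHn; [intros; apply H; lia| lia]).
  assert (0 <= f n) by (apply H; lia). lra. Qed.

Lemma dot_unit N g i : (i < N)%nat -> dot N g (unitv i) = g i.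
Proof. unfold dot, unitv. induction N; simpl; intros Hi; [lia|].
  destruct (Nat.eq_dec i N).
  - subst. rewrite Nat.eqb_refl.
    replace (sumN N (fun i0 => g i0 * (if Nat.eqb i0 N then 1 else 0))) with (sumN N (fun _ => 0)).
    rewrite sumN_const; lra.
    apply sumN_ext; intros j Hj. replace (Nat.eqb j N) with false. lra.
    symmetry; apply Nat.eqb_neq; lia.
  - rewrite IHN by lia. replace (Nat.eqb N i) with false. lra. symmetry; apply Nat.eqb_neq; lia.
Qed.

Lemma dot_comm N a b : dot N a b = dot N b a.
Proof. unfold dot; apply sumN_ext; intros; ring. Qed.

Lemma dot_lin N a b c x y : dot N (vadd (vscal x a) (vscal y b)) c = x * dot N a c + y * dot N b c.
Proof. unfold dot, vadd, vscal. rewrite <- !sumN_scal, <- sumN_plus. apply sumN_ext; intros; ring. Qed.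

Lemma dot_scal_r N a c t : dot N a (vscal t c) = t * dot N a c.
Proof. unfold dot, vscal. rewrite <- sumN_scal. apply sumN_ext; intros; ring. Qed.

Lemma dot_self_nonneg N w : 0 <= dot N w w.
Proof. apply sumN_nonneg; intros; nra. Qed.

Lemma vnorm_nonneg N w : 0 <= vnorm N w.
Proof. apply sqrt_pos. Qed.

Lemma coord_le_vnorm N w i : (i < N)%nat -> Rabs (w i) <= vnorm N w.
Proof. intros Hi. unfold vnorm. rewrite <- sqrt_Rsqr_abs. apply sqrt_le_1_alt.
  unfold Rsqr. apply (sumN_term_le N (fun i => w i * w i)); auto. intros; nra. Qed.

Lemma L1_nonneg N w : 0 <= L1 N w.
Proof. apply sumN_nonneg; intros; apply Rabs_pos. Qed.

Lemma vnorm_le_L1 N w : vnorm N w <= L1 N w.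
Proof. unfold vnorm. rewrite <- (sqrt_Rsqr (L1 N w)) by apply L1_nonneg.
  apply sqrt_le_1_alt. unfold Rsqr, L1, dot. induction N; simpl; [lra|].
  assert (0 <= sumN N (fun i => Rabs (w i))) by (apply sumN_nonneg; intros; apply Rabs_pos).
  assert (Rabs (w N) * Rabs (w N) = w N * w N) by (rewrite <- Rabs_mult; apply Rabs_right; nra).
  assert (0 <= Rabs (w N)) by apply Rabs_pos. nra. Qed.

Lemma dot_bound N a b : Rabs (dot N a b) <= vnorm N a * L1 N b.
Proof. unfold dot, L1. eapply Rle_trans; [apply sumN_abs|]. rewrite <- sumN_scal.
  apply sumN_le; intros i Hi. rewrite Rabs_mult.
  apply Rmult_le_compat_r; [apply Rabs_pos| apply coord_le_vnorm; auto]. Qed.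

Lemma dot_bound2 N a b : Rabs (dot N a b) <= L1 N a * vnorm N b.
Proof. rewrite dot_comm, Rmult_comm; apply dot_bound. Qed.

Lemma vnorm_scal N t v : vnorm N (vscal t v) = Rabs t * vnorm N v.
Proof. unfold vnorm. replace (dot N (vscal t v) (vscal t v)) with ((t*t) * dot N v v).
  rewrite sqrt_mult_alt by nra. rewrite <- (sqrt_Rsqr_abs t). reflexivity.
  unfold dot, vscal. rewrite <- sumN_scal. apply sumN_ext; intros; ring. Qed.

Lemma vdist_refl N x : vdist N x x = 0.
Proof. unfold vdist, vnorm, dot, vsub. rewrite (sumN_ext _ _ (fun _ => 0)).
  rewrite sumN_const, Rmult_0_r; apply sqrt_0. intros; ring. Qed.

Lemma vnorm_ext N a b : (forall i, (i < N)%nat -> a i = b i) -> vnorm N a = vnorm N b.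
Proof. intros H; unfold vnorm, dot. f_equal. apply sumN_ext; intros; rewrite H; auto. Qed.

Lemma vdist_sym N x y : vdist N x y = vdist N y x.
Proof. unfold vdist, vnorm, dot, vsub. f_equal; apply sumN_ext; intros; ring. Qed.

Lemma vdist_dir N x v t : vdist N (vadd x (vscal t v)) x = Rabs t * vnorm N v.
Proof. unfold vdist. rewrite <- vnorm_scal. apply vnorm_ext; intros; unfold vsub, vadd, vscal; ring. Qed.

Lemma dot_dir N g x v t : dot N g (vsub (vadd x (vscal t v)) x) = t * dot N g v.
Proof. unfold dot, vsub, vadd, vscal. rewrite <- sumN_scal. apply sumN_ext; intros; ring. Qed.

Lemma L1_sub N a b : L1 N a <= L1 N b + L1 N (vsub a b).
Proof. unfold L1, vsub. rewrite <- sumN_plus. apply sumN_le; intros.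
  replace (a i) with (b i + (a i - b i)) at 1 by ring. apply Rabs_triang. Qed.

Lemma L1_le_vnorm N a : L1 N a <= INR N * vnorm N a.
Proof. unfold L1. rewrite <- sumN_const. apply sumN_le; intros; apply coord_le_vnorm; auto. Qed.

Lemma L1_le_coord N a M : (forall i, (i < N)%nat -> Rabs (a i) <= M) -> L1 N a <= INR N * M.
Proof. unfold L1. rewrite <- sumN_const. intros; apply sumN_le; auto. Qed.


Lemma Frechet_dir N f x g v : Frechet N f x g ->
  derivable_pt_lim (fun t => f (vadd x (vscal t v))) 0 (dot N g v).
Proof.
  intros Hf eps Heps.
  set (nv := vnorm N v). assert (Hnv : 0 <= nv) by apply vnorm_nonneg.
  destruct (Hf (eps / (2 * (nv + 1)))) as [d [Hd H]].
  { apply Rdiv_lt_0_compat; lra. }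
  assert (Hd' : 0 < d / (nv + 1)) by (apply Rdiv_lt_0_compat; lra).
  exists (mkposreal _ Hd'). simpl. intros h Hh0 Hh.
  rewrite Rplus_0_l.
  specialize (H (vadd x (vscal h v))). rewrite vdist_dir, dot_dir in H. fold nv in H.
  assert (Hah : 0 < Rabs h) by (apply Rabs_pos_lt; auto).
  assert (Rabs h * nv < d).
  { apply (Rmult_lt_compat_r (nv + 1)) in Hh; [|lra].
    replace (d / (nv + 1) * (nv + 1)) with d in Hh by (field; repeat split; lra). nra. }
  specialize (H H0).
  replace ((f (vadd x (vscal h v)) - f (vadd x (vscal 0 v))) / h - dot N g v)
    with ((f (vadd x (vscal h v)) - f x - h * dot N g v) / h).
  2:{ replace (vadd x (vscal 0 v)) with x. field; auto.
      apply functional_extensionality; intros; unfold vadd, vscal; ring. }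
  unfold Rdiv at 1. rewrite Rabs_mult, Rabs_inv.
  apply (Rmult_le_compat_r (/ Rabs h)) in H; [|left; apply Rinv_0_lt_compat; auto].
  eapply Rle_lt_trans; [apply H|].
  replace (eps / (2 * (nv + 1)) * (Rabs h * nv) * / Rabs h) with (eps * nv / (2 * (nv + 1))).
  2: field; repeat split; lra.
  apply Rmult_lt_reg_r with (2 * (nv + 1)); [lra|].
  replace (eps * nv / (2 * (nv + 1)) * (2 * (nv + 1))) with (eps * nv) by (field; repeat split; lra). nra.
Qed.

Lemma frac_le a b : 0 <= a -> 0 <= b -> a / (a + 1) * b <= b.
Proof. intros. apply Rmult_le_reg_r with (a + 1); [lra|].
  replace (a / (a + 1) * b * (a + 1)) with (a * b) by (field; repeat split; lra). nra. Qed.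

Lemma Frechet_dot_unique N f x g1 g2 v : Frechet N f x g1 -> Frechet N f x g2 -> dot N g1 v = dot N g2 v.
Proof. intros H1 H2. eapply uniqueness_limite; apply Frechet_dir; eauto. Qed.

Lemma Frechet_coord_unique N f x g1 g2 i : (i < N)%nat -> Frechet N f x g1 -> Frechet N f x g2 -> g1 i = g2 i.
Proof. intros Hi H1 H2. rewrite <- (dot_unit N g1 i), <- (dot_unit N g2 i) by auto.
  eapply Frechet_dot_unique; eauto. Qed.

Lemma Frechet_local N f f' x g : (exists r, 0 < r /\ forall y, vdist N y x < r -> f y = f' y) ->
  Frechet N f' x g -> Frechet N f x g.
Proof. intros [r [Hr Hloc]] H eps Heps. destruct (H eps Heps) as [d [Hd Hy]].
  exists (Rmin d r). split. apply Rmin_pos; auto. intros y Hyd.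
  rewrite (Hloc y), (Hloc x). apply Hy. eapply Rlt_le_trans; [apply Hyd| apply Rmin_l].
  rewrite vdist_refl; auto. eapply Rlt_le_trans; [apply Hyd| apply Rmin_r]. Qed.

Lemma Frechet_lip N f x g : Frechet N f x g -> exists d, 0 < d /\ forall y, vdist N y x < d ->
  Rabs (f y - f x) <= (L1 N g + 1) * vdist N y x.
Proof. intros H. destruct (H 1 Rlt_0_1) as [d [Hd Hy]]. exists d; split; auto. intros y Hyd.
  specialize (Hy y Hyd). assert (HB := dot_bound2 N g (vsub y x)). fold (vdist N y x) in HB.
  replace (f y - f x) with ((f y - f x - dot N g (vsub y x)) + dot N g (vsub y x)) by ring.
  eapply Rle_trans; [apply Rabs_triang|]. lra. Qed.

Lemma deriv_lin_bound f z0 l : derivable_pt_lim f z0 l -> forall eps, 0 < eps -> exists d, 0 < d /\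
  forall z, Rabs (z - z0) < d -> Rabs (f z - f z0 - l * (z - z0)) <= eps * Rabs (z - z0).
Proof. intros H eps Heps. destruct (H eps Heps) as [d Hd]. exists d; split; [apply cond_pos|].
  intros z Hz. destruct (Req_dec (z - z0) 0) as [E|E].
  - replace z with z0 by lra. replace (f z0 - f z0 - l * (z0 - z0)) with 0 by ring. rewrite Rabs_R0; apply Rmult_le_pos; [lra|apply Rabs_pos].
  - specialize (Hd (z - z0) E Hz). replace (z0 + (z - z0)) with z in Hd by ring.
    replace (f z - f z0 - l * (z - z0)) with (((f z - f z0) / (z - z0) - l) * (z - z0)) by (field; auto).
    rewrite Rabs_mult. apply Rmult_le_compat_r; [apply Rabs_pos| lra]. Qed.

Lemma Frechet_comp N f x g phi l : Frechet N f x g -> derivable_pt_lim phi (f x) l ->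
  Frechet N (fun y => phi (f y)) x (vscal l g).
Proof.
  intros Hf Hphi eps Heps.
  set (G := L1 N g + 1). assert (HG : 0 < G) by (unfold G; assert (H:=L1_nonneg N g); lra).
  destruct (Frechet_lip _ _ _ _ Hf) as [d1 [Hd1 H1]]. fold G in H1.
  destruct (deriv_lin_bound _ _ _ Hphi (eps / (2 * G))) as [d2 [Hd2 H2]].
  { apply Rdiv_lt_0_compat; lra. }
  destruct (Hf (eps / (2 * (Rabs l + 1)))) as [d3 [Hd3 H3]].
  { apply Rdiv_lt_0_compat; [|assert (H:=Rabs_pos l)]; lra. }
  exists (Rmin d1 (Rmin (d2 / G) d3)). split.
  { repeat apply Rmin_pos; auto. apply Rdiv_lt_0_compat; auto. }
  intros y Hy. assert (Hy1 : vdist N y x < d1) by (eapply Rlt_le_trans; [apply Hy|apply Rmin_l]).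
  assert (Hy2 : vdist N y x < d2 / G) by (eapply Rlt_le_trans; [apply Hy|]; eapply Rle_trans; [apply Rmin_r|apply Rmin_l]).
  assert (Hy3 : vdist N y x < d3) by (eapply Rlt_le_trans; [apply Hy|]; eapply Rle_trans; [apply Rmin_r|apply Rmin_r]).
  specialize (H1 y Hy1). specialize (H3 y Hy3).
  assert (Hz : Rabs (f y - f x) < d2).
  { eapply Rle_lt_trans; [apply H1|]. apply (Rmult_lt_compat_l G) in Hy2; auto.
    replace (G * (d2 / G)) with d2 in Hy2 by (field; repeat split; lra). lra. }
  specialize (H2 (f y) Hz).
  replace (dot N (vscal l g) (vsub y x)) with (l * dot N g (vsub y x)).
  2:{ unfold dot, vscal. rewrite <- sumN_scal. apply sumN_ext; intros; ring. }
  set (h := vdist N y x) in *. assert (Hh : 0 <= h) by apply vnorm_nonneg.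
  replace (phi (f y) - phi (f x) - l * dot N g (vsub y x)) with
    ((phi (f y) - phi (f x) - l * (f y - f x)) + l * (f y - f x - dot N g (vsub y x))) by ring.
  eapply Rle_trans; [apply Rabs_triang|]. rewrite Rabs_mult.
  assert (A1 : eps / (2 * G) * Rabs (f y - f x) <= eps / 2 * h).
  { eapply Rle_trans. apply Rmult_le_compat_l; [left; apply Rdiv_lt_0_compat; lra| apply H1].
    right; field; repeat split; lra. }
  assert (A2 : Rabs l * Rabs (f y - f x - dot N g (vsub y x)) <= eps / 2 * h).
  { eapply Rle_trans. apply Rmult_le_compat_l; [apply Rabs_pos| apply H3].
    assert (Hl := Rabs_pos l).
    replace (Rabs l * (eps / (2 * (Rabs l + 1)) * h)) with ((Rabs l / (Rabs l + 1)) * (eps / 2 * h)) by (field; repeat split; lra).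
    apply frac_le; auto. apply Rmult_le_pos; lra. }
  lra.
Qed.

Lemma Frechet_mul N f1 f2 x g1 g2 : Frechet N f1 x g1 -> Frechet N f2 x g2 ->
  Frechet N (fun y => f1 y * f2 y) x (vadd (vscal (f2 x) g1) (vscal (f1 x) g2)).
Proof.
  intros H1 H2 eps Heps.
  set (G1 := L1 N g1 + 1). assert (HG1 : 0 < G1) by (unfold G1; assert (H:=L1_nonneg N g1); lra).
  set (G2 := L1 N g2 + 1). assert (HG2 : 0 < G2) by (unfold G2; assert (H:=L1_nonneg N g2); lra).
  destruct (Frechet_lip _ _ _ _ H1) as [d1 [Hd1 L1']]. fold G1 in L1'.
  destruct (Frechet_lip _ _ _ _ H2) as [d2 [Hd2 L2']]. fold G2 in L2'.
  assert (Ha1 := Rabs_pos (f1 x)). assert (Ha2 := Rabs_pos (f2 x)).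
  destruct (H1 (eps / (3 * (Rabs (f2 x) + 1)))) as [d3 [Hd3 H3]]. { apply Rdiv_lt_0_compat; lra. }
  destruct (H2 (eps / (3 * (Rabs (f1 x) + 1)))) as [d4 [Hd4 H4]]. { apply Rdiv_lt_0_compat; lra. }
  set (d5 := eps / (3 * G1 * G2)). assert (Hd5 : 0 < d5) by (apply Rdiv_lt_0_compat; nra).
  exists (Rmin (Rmin d1 d2) (Rmin (Rmin d3 d4) d5)). split.
  { repeat apply Rmin_pos; auto. }
  intros y Hy.
  assert (Hm := Rmin_l (Rmin d1 d2) (Rmin (Rmin d3 d4) d5)). assert (Hm' := Rmin_r (Rmin d1 d2) (Rmin (Rmin d3 d4) d5)).
  assert (M1 := Rmin_l d1 d2). assert (M2 := Rmin_r d1 d2). assert (M3 := Rmin_l (Rmin d3 d4) d5).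
  assert (M4 := Rmin_r (Rmin d3 d4) d5). assert (M5 := Rmin_l d3 d4). assert (M6 := Rmin_r d3 d4).
  specialize (L1' y ltac:(lra)). specialize (L2' y ltac:(lra)).
  specialize (H3 y ltac:(lra)). specialize (H4 y ltac:(lra)). assert (Hy5 : vdist N y x < d5) by lra.
  rewrite dot_lin.
  set (h := vdist N y x) in *. assert (Hh : 0 <= h) by apply vnorm_nonneg.
  set (e1 := f1 y - f1 x - dot N g1 (vsub y x)) in *.
  set (e2 := f2 y - f2 x - dot N g2 (vsub y x)) in *.
  replace (f1 y * f2 y - f1 x * f2 x - (f2 x * dot N g1 (vsub y x) + f1 x * dot N g2 (vsub y x)))
    with ((f1 y - f1 x) * (f2 y - f2 x) + f2 x * e1 + f1 x * e2) by (unfold e1, e2; ring).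
  eapply Rle_trans; [apply Rabs_triang|]. eapply Rle_trans; [apply Rplus_le_compat_r, Rabs_triang|].
  rewrite !Rabs_mult.
  assert (B1 : Rabs (f1 y - f1 x) * Rabs (f2 y - f2 x) <= eps / 3 * h).
  { assert (Q : Rabs (f2 y - f2 x) <= eps / (3 * G1)).
    { eapply Rle_trans; [apply L2'|]. unfold d5 in Hy5.
      apply Rle_trans with (G2 * (eps / (3 * G1 * G2))); [apply Rmult_le_compat_l; lra|].
      right; field; repeat split; lra. }
    eapply Rle_trans. apply Rmult_le_compat; [apply Rabs_pos|apply Rabs_pos|apply L1'|apply Q].
    right; field; repeat split; lra. }
  assert (B2 : Rabs (f2 x) * Rabs e1 <= eps / 3 * h).
  { eapply Rle_trans. apply Rmult_le_compat_l; [lra|apply H3].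
    replace (Rabs (f2 x) * (eps / (3 * (Rabs (f2 x) + 1)) * h)) with ((Rabs (f2 x) / (Rabs (f2 x) + 1)) * (eps / 3 * h)) by (field; repeat split; lra).
    apply frac_le; auto. apply Rmult_le_pos; lra. }
  assert (B3 : Rabs (f1 x) * Rabs e2 <= eps / 3 * h).
  { eapply Rle_trans. apply Rmult_le_compat_l; [lra|apply H4].
    replace (Rabs (f1 x) * (eps / (3 * (Rabs (f1 x) + 1)) * h)) with ((Rabs (f1 x) / (Rabs (f1 x) + 1)) * (eps / 3 * h)) by (field; repeat split; lra).
    apply frac_le; auto. apply Rmult_le_pos; lra. }
  lra.
Qed.

Lemma sub_incr (psi : nat -> nat) : (forall n, (psi n < psi (S n))%nat) -> forall n, (n <= psi n)%nat.
Proof. intros H n; induction n; [lia|]. specialize (H n); lia. Qed.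

Lemma incr_mono (psi : nat -> nat) : (forall n, (psi n < psi (S n))%nat) -> forall n m, (n <= m)%nat -> (psi n <= psi m)%nat.
Proof. intros H n m Hnm; induction Hnm; auto. specialize (H m); lia. Qed.

Lemma Un_cv_sub u l psi : (forall n, (psi n < psi (S n))%nat) -> Un_cv u l -> Un_cv (fun n => u (psi n)) l.
Proof. intros Hp Hu eps He. destruct (Hu eps He) as [n0 Hn0]. exists n0. intros n Hn.
  apply Hn0. assert (H := sub_incr psi Hp n). lia. Qed.

Lemma BW1 (w : nat -> R) K : (forall n, Rabs (w n) <= K) ->
  exists psi : nat -> nat, (forall n, (psi n < psi (S n))%nat) /\ exists a, Un_cv (fun n => w (psi n)) a.
Proof.
  intros HK. destruct (Bolzano_Weierstrass w (fun c => -K <= c <= K) (compact_P3 (-K) K)) as [a Ha].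
  { intros n. specialize (HK n). revert HK; unfold Rabs; destruct (Rcase_abs (w n)); lra. }
  assert (Hex : forall n lb : nat, exists p, (lb <= p)%nat /\ Rabs (w p - a) < / (INR n + 1)).
  { intros n lb. assert (Hp : 0 < / (INR n + 1)) by (apply Rinv_0_lt_compat; assert (H:=pos_INR n); lra).
    assert (Hnb : neighbourhood (disc a (mkposreal _ Hp)) a) by (exists (mkposreal _ Hp); intros y Hy; exact Hy).
    destruct (Ha (disc a (mkposreal _ Hp)) lb Hnb) as [p [Hp1 Hp2]].
    exists p; split; auto. }
  set (pick := fun n lb => proj1_sig (constructive_indefinite_description _ (Hex n lb))).
  assert (Hpick : forall n lb, (lb <= pick n lb)%nat /\ Rabs (w (pick n lb) - a) < / (INR n + 1)).
  { intros n lb. unfold pick. destruct (constructive_indefinite_description _ (Hex n lb)); simpl; auto. }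
  set (psi := fix psi n := match n with O => pick O O | S m => pick (S m) (S (psi m)) end).
  exists psi. split.
  - intros n. simpl. destruct (Hpick (S n) (S (psi n))). lia.
  - exists a. intros eps He. destruct (archimed (/ eps)) as [Ha1 _].
    assert (Hz : (0 <= up (/ eps))%Z). { apply le_IZR. assert (0 < / eps) by (apply Rinv_0_lt_compat; auto). simpl; lra. }
    exists (Z.to_nat (up (/ eps))). intros n Hn. unfold R_dist.
    assert (Hb : Rabs (w (psi n) - a) < / (INR n + 1)) by (destruct n; simpl; apply Hpick).
    eapply Rlt_le_trans; [apply Hb|].
    assert (INR (Z.to_nat (up (/ eps))) <= INR n) by (apply le_INR; auto).
    rewrite INR_IZR_INZ, Z2Nat.id in H by auto.
    assert (0 < / eps) by (apply Rinv_0_lt_compat; auto).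
    replace eps with (/ / eps) by (field; repeat split; lra). apply Rinv_le_contravar; lra.
Qed.

Lemma BWN N (u : nat -> vec) K : (forall n i, (i < N)%nat -> Rabs (u n i) <= K) ->
  forall m, exists phi : nat -> nat, (forall n, (phi n < phi (S n))%nat) /\
    exists l : vec, forall i, (i < m)%nat -> (i < N)%nat -> Un_cv (fun n => u (phi n) i) (l i).
Proof.
  intros HK m. induction m.
  - exists (fun n => n). split; [intros; lia|]. exists (fun _ => 0). intros; lia.
  - destruct IHm as [phi [Hphi [l Hl]]].
    destruct (lt_dec m N) as [HmN|HmN].
    + destruct (BW1 (fun n => u (phi n) m) K) as [psi [Hpsi [a Ha]]]. { intros; apply HK; auto. }
      exists (fun n => phi (psi n)). split.
      { intros n. assert (H1 := Hpsi n). assert (H2 := incr_mono phi Hphi (S (psi n)) (psi (S n)) H1).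
        specialize (Hphi (psi n)). lia. }
      exists (fun i => if Nat.eqb i m then a else l i). intros i Hi HiN.
      destruct (Nat.eqb_spec i m).
      * subst. exact Ha.
      * apply (Un_cv_sub (fun n => u (phi n) i)); auto. apply Hl; auto; lia.
    + exists phi. split; auto. exists l. intros i Hi HiN. apply Hl; auto; lia.
Qed.

Lemma L1_cv N (w : nat -> vec) l : (forall i, (i < N)%nat -> Un_cv (fun n => w n i) (l i)) ->
  forall eps, 0 < eps -> exists n0, forall n, (n0 <= n)%nat -> L1 N (vsub (w n) l) < eps.
Proof.
  intros Hc. assert (Hm : forall m, (m <= N)%nat -> forall eps, 0 < eps -> exists n0, forall n, (n0 <= n)%nat ->
     sumN m (fun i => Rabs (vsub (w n) l i)) <= INR m * eps).
  { induction m; intros Hm eps He.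
    - exists O. intros; simpl; lra.
    - destruct (IHm ltac:(lia) eps He) as [n1 H1]. destruct (Hc m ltac:(lia) eps He) as [n2 H2].
      exists (max n1 n2). intros n Hn. cbn [sumN]. rewrite S_INR.
      specialize (H1 n ltac:(lia)). specialize (H2 n ltac:(lia)). unfold R_dist in H2. unfold vsub in *. lra. }
  intros eps He. assert (HN : 0 < INR N + 1) by (assert (H:=pos_INR N); lra).
  destruct (Hm N (le_n N) (eps / (INR N + 1))) as [n0 H0]. { apply Rdiv_lt_0_compat; lra. }
  exists n0. intros n Hn. specialize (H0 n Hn). unfold L1. eapply Rle_lt_trans; [apply H0|].
  apply Rmult_lt_reg_r with (INR N + 1); auto.
  replace (INR N * (eps / (INR N + 1)) * (INR N + 1)) with (INR N * eps) by (field; repeat split; lra). nra.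
Qed.

Lemma L1_tri N a b c : L1 N (vsub a c) <= L1 N (vsub a b) + L1 N (vsub b c).
Proof. unfold L1, vsub. rewrite <- sumN_plus. apply sumN_le; intros.
  replace (a i - c i) with ((a i - b i) + (b i - c i)) by ring. apply Rabs_triang. Qed.

Lemma closure_coord N O M x : (forall y, O y -> vnorm N y <= M) -> closure N O x ->
  forall i, (i < N)%nat -> Rabs (x i) <= M + 1.
Proof. intros HM Hx i Hi. destruct (Hx 1 Rlt_0_1) as [y [Hy Hxy]].
  assert (H1 := coord_le_vnorm N y i Hi). assert (H2 := coord_le_vnorm N (vsub x y) i Hi).
  specialize (HM y Hy). change (vsub x y i) with (x i - y i) in H2. fold (vdist N x y) in H2.
  replace (x i) with (y i + (x i - y i)) by ring. eapply Rle_trans; [apply Rabs_triang|]. lra. Qed.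

Lemma bounded_cont N O F : is_bounded N O -> contv_on N (closure N O) F ->
  exists B, 0 <= B /\ forall x, closure N O x -> L1 N (F x) <= B.
Proof.
  intros [M HM] HF. apply NNPP. intros Hno.
  assert (Hex : forall n : nat, exists x, closure N O x /\ INR n < L1 N (F x)).
  { intros n. apply NNPP. intros Hn. apply Hno. exists (Rmax 0 (INR n)). split; [apply Rmax_l|].
    intros x Hx. destruct (Rle_lt_dec (L1 N (F x)) (INR n)). eapply Rle_trans; [eauto|apply Rmax_r].
    exfalso; apply Hn; exists x; auto. }
  set (xs := fun n => proj1_sig (constructive_indefinite_description _ (Hex n))).
  assert (Hxs : forall n, closure N O (xs n) /\ INR n < L1 N (F (xs n))).
  { intros n; unfold xs; destruct (constructive_indefinite_description _ (Hex n)); auto. }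
  destruct (BWN N xs (M + 1)) with (m := N) as [phi [Hphi [l Hl]]].
  { intros n i Hi. apply (closure_coord N O M); auto. apply Hxs. }
  assert (Hcv := L1_cv N (fun n => xs (phi n)) l (fun i Hi => Hl i Hi Hi)).
  assert (HNp : 0 < INR N + 1) by (assert (H:=pos_INR N); lra).
  assert (Hcl : closure N O l).
  { intros eps He. destruct (Hcv (eps / 2)) as [n0 Hn0]. lra.
    specialize (Hn0 n0 (le_n _)). destruct (proj1 (Hxs (phi n0)) (eps / (2 * (INR N + 1)))) as [y [Hy Hxy]].
    { apply Rdiv_lt_0_compat; lra. }
    exists y. split; auto. unfold vdist. eapply Rle_lt_trans; [apply vnorm_le_L1|].
    eapply Rle_lt_trans; [apply (L1_tri _ _ (xs (phi n0)))|].
    assert (L1 N (vsub l (xs (phi n0))) = L1 N (vsub (xs (phi n0)) l)).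
    { unfold L1, vsub. apply sumN_ext; intros. rewrite <- Rabs_Ropp. f_equal; ring. }
    assert (H2 := L1_le_vnorm N (vsub (xs (phi n0)) y)). fold (vdist N (xs (phi n0)) y) in H2.
    assert (INR N * vdist N (xs (phi n0)) y <= (INR N + 1) * (eps / (2 * (INR N + 1)))).
    { apply Rmult_le_compat; [apply pos_INR|apply vnorm_nonneg|lra|lra]. }
    replace ((INR N + 1) * (eps / (2 * (INR N + 1)))) with (eps / 2) in H0 by (field; repeat split; lra). lra. }
  destruct (HF l Hcl 1 Rlt_0_1) as [d [Hd Hcont]].
  destruct (Hcv d Hd) as [n1 Hn1].
  destruct (archimed (L1 N (F l) + INR N)) as [Hup _].
  set (n := max n1 (Z.to_nat (up (L1 N (F l) + INR N)))).
  assert (Hz : (0 <= up (L1 N (F l) + INR N))%Z).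
  { apply le_IZR. assert (H1 := L1_nonneg N (F l)). assert (H2 := pos_INR N). simpl; lra. }
  specialize (Hn1 n ltac:(unfold n; lia)).
  assert (Hv : vdist N (xs (phi n)) l < d). { unfold vdist; eapply Rle_lt_trans; [apply vnorm_le_L1|auto]. }
  specialize (Hcont (xs (phi n)) (proj1 (Hxs (phi n))) Hv).
  assert (H1 := L1_sub N (F (xs (phi n))) (F l)).
  assert (H2 := L1_le_vnorm N (vsub (F (xs (phi n))) (F l))). fold (vdist N (F (xs (phi n))) (F l)) in H2.
  assert (H3 : INR N * vdist N (F (xs (phi n))) (F l) <= INR N * 1).
  { apply Rmult_le_compat_l; [apply pos_INR|lra]. }
  assert (H4 := proj2 (Hxs (phi n))).
  assert (H5 : INR n <= INR (phi n)) by (apply le_INR, sub_incr; auto).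
  assert (H6 : IZR (up (L1 N (F l) + INR N)) <= INR n).
  { rewrite <- (Z2Nat.id _ Hz), <- INR_IZR_INZ. apply le_INR. unfold n; lia. }
  lra.
Qed.

Lemma deriv_local f g x l : (exists d, 0 < d /\ forall y, Rabs (y - x) < d -> f y = g y) ->
  derivable_pt_lim f x l -> derivable_pt_lim g x l.
Proof. intros [d [Hd Hfg]] H eps He. destruct (H eps He) as [d1 Hd1].
  assert (Hm : 0 < Rmin d d1) by (apply Rmin_pos; auto; apply cond_pos).
  exists (mkposreal _ Hm). simpl. intros h Hh0 Hh.
  rewrite <- !Hfg. apply Hd1; auto. eapply Rlt_le_trans; [apply Hh|apply Rmin_r].
  rewrite Rminus_diag, Rabs_R0; auto.
  replace (x + h - x) with h by ring. eapply Rlt_le_trans; [apply Hh|apply Rmin_l]. Qed.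

Lemma deriv_const_local f x c : (exists d, 0 < d /\ forall y, Rabs (y - x) < d -> f y = c) ->
  forall l, derivable_pt_lim f x l -> l = 0.
Proof. intros H l Hl. eapply uniqueness_limite; [apply Hl|].
  apply (deriv_local (fun _ => c)). destruct H as [d [Hd H]]. exists d; split; auto.
  intros; symmetry; auto. apply derivable_pt_lim_const. Qed.

Lemma Rpower_pos x e : 0 < Rpower x e.
Proof. apply exp_pos. Qed.

Lemma Rpower_le_base a b c : 0 <= c -> 0 < a <= b -> Rpower a c <= Rpower b c.
Proof. apply Rle_Rpower_l. Qed.

Lemma Rpower_div x y e : 0 < x -> 0 < y -> Rpower (x / y) e = Rpower x e / Rpower y e.
Proof. intros. unfold Rdiv. rewrite <- Rpower_mult_distr by (auto; apply Rinv_0_lt_compat; auto).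
  f_equal. rewrite <- Rpower_Ropp. unfold Rpower. rewrite ln_Rinv by auto. f_equal; ring. Qed.

Lemma Rpower_small a : 0 < a -> forall eps, 0 < eps -> exists d, 0 < d /\
  forall t, 0 < t < d -> Rpower t a < eps.
Proof. intros Ha eps He. exists (Rpower eps (/ a)). split. apply Rpower_pos.
  intros t [Ht1 Ht2]. replace eps with (Rpower (Rpower eps (/ a)) a).
  apply Rlt_Rpower_l; auto. rewrite Rpower_mult. replace (/ a * a) with 1 by (field; lra).
  apply Rpower_1; auto. Qed.

Lemma INR_pow_cv0 a : 0 < a -> Un_cv (fun k => Rpower (INR k) (- a)) 0.
Proof. intros Ha eps He.
  destruct (archimed (Rpower eps (- / a))) as [Hup _].
  assert (Hp := Rpower_pos eps (- / a)).
  assert (Hz : (0 <= up (Rpower eps (- / a)))%Z) by (apply le_IZR; simpl; lra).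
  exists (S (Z.to_nat (up (Rpower eps (- / a))))). intros n Hn. unfold R_dist.
  rewrite Rminus_0_r, Rabs_right by (left; apply Rpower_pos).
  assert (Hn' : Rpower eps (- / a) < INR n).
  { eapply Rlt_le_trans; [apply Hup|]. rewrite <- (Z2Nat.id _ Hz), <- INR_IZR_INZ. apply le_INR; lia. }
  replace eps with (Rpower (Rpower eps (- / a)) (- a)).
  set (P := Rpower eps (- / a)) in *.
  rewrite (Rpower_Ropp (INR n)), (Rpower_Ropp P). apply Rinv_lt_contravar. apply Rmult_lt_0_compat; apply Rpower_pos.
  apply Rlt_Rpower_l; auto.
  rewrite Rpower_mult. replace (- / a * - a) with 1 by (field; lra). apply Rpower_1; auto. Qed.

Lemma rho_deriv rho : smooth rho -> (exists a, 0 < a < 2 /\ forall t, a < Rabs t -> rho t = 0) ->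
  exists rp : R -> R, (forall t, derivable_pt_lim rho t (rp t)) /\
    (exists Mr, 0 <= Mr /\ forall t, Rabs (rp t) <= Mr) /\
    (forall t, 2 <= Rabs t -> rp t = 0).
Proof.
  intros [D [HD0 HD]] [a [Ha Hsupp]].
  assert (Hr : rho = D O) by (apply functional_extensionality; intros; rewrite HD0; auto).
  exists (D 1%nat).
  assert (Hd : forall t, derivable_pt_lim rho t (D 1%nat t)) by (intros; rewrite Hr; apply HD).
  assert (Hz : forall t, 2 <= Rabs t -> D 1%nat t = 0).
  { intros t Ht. apply (deriv_const_local rho t 0); [|apply Hd].
    exists (Rabs t - a). split; [lra|]. intros y Hy. apply Hsupp.
    assert (Rabs t <= Rabs y + Rabs (y - t)).
    { replace t with (y - (y - t)) at 1 by ring. eapply Rle_trans; [apply Rabs_triang|]. rewrite Rabs_Ropp; lra. }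
    lra. }
  split; auto. split; auto.
  assert (Hc : forall t, continuity_pt (D 1%nat) t).
  { intros t. apply (derivable_continuous_pt (D 1%nat) t (exist _ (D 2%nat t) (HD 1%nat t))). }
  destruct (continuity_ab_maj (D 1%nat) (-2) 2) as [M1 [HM1 _]]; [lra|intros; apply Hc|].
  destruct (continuity_ab_maj (fun t => - D 1%nat t) (-2) 2) as [M2 [HM2 _]]; [lra|intros; apply continuity_pt_opp, Hc|].
  exists (Rabs (D 1%nat M1) + Rabs (D 1%nat M2)). split. assert (H1:=Rabs_pos (D 1%nat M1)); assert (H2:=Rabs_pos (D 1%nat M2)); lra.
  intros t. destruct (Rle_lt_dec 2 (Rabs t)) as [Ht|Ht].
  - rewrite Hz by auto. rewrite Rabs_R0. assert (H1:=Rabs_pos (D 1%nat M1)); assert (H2:=Rabs_pos (D 1%nat M2)); lra.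
  - assert (Ht' : -2 <= t <= 2) by (revert Ht; unfold Rabs; destruct (Rcase_abs t); lra).
    specialize (HM1 t Ht'). specialize (HM2 t Ht').
    assert (H1 := Rle_abs (D 1%nat M1)). assert (H2 := Rle_abs (- D 1%nat M2)). rewrite Rabs_Ropp in H2.
    unfold Rabs at 1; destruct (Rcase_abs (D 1%nat t)); assert (H3:=Rabs_pos (D 1%nat M1)); assert (H4:=Rabs_pos (D 1%nat M2)); lra.
Qed.

Lemma hfun_deriv s rho rp r : 0 < r -> derivable_pt_lim rho r (rp r) ->
  derivable_pt_lim (hfun s rho) r (s * Rpower r (s - 1) * (1 - rho r) + Rpower r s * (- rp r)).
Proof. intros Hr Hd. apply (deriv_local (fun t => Rpower t s * (1 - rho t))).
  - exists r. split; auto. intros y Hy. unfold hfun, ppow, zeta.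
    destruct (Rlt_dec 0 y); auto. exfalso; revert Hy; unfold Rabs; destruct (Rcase_abs (y - r)); lra.
  - apply (derivable_pt_lim_mult (fun t => Rpower t s) (fun t => 1 - rho t)). apply derivable_pt_lim_power; auto.
    replace (- rp r) with (0 - rp r) by ring. apply (derivable_pt_lim_minus (fun _ => 1) rho); auto. apply derivable_pt_lim_const.
Qed.

Lemma dot_scal_l N a c t : dot N (vscal t a) c = t * dot N a c.
Proof. unfold dot, vscal. rewrite <- sumN_scal. apply sumN_ext; intros; ring. Qed.

Lemma dot_add_l N a b c : dot N (vadd a b) c = dot N a c + dot N b c.
Proof. unfold dot, vadd. rewrite <- sumN_plus. apply sumN_ext; intros; ring. Qed.

Lemma boundary_delta0 N Omega delta
  (Hdelta_sd : exists eta, 0 < eta /\ forall x,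
      (exists sg, boundary N Omega sg /\ vdist N x sg < eta) ->
      forall d1 d2, IsInfDist N (fun y => ~ Omega y) x d1 ->
                    IsInfDist N Omega x d2 -> delta x = d1 - d2) :
  forall x, boundary N Omega x -> delta x = 0.
Proof.
  intros x Hx. destruct Hdelta_sd as [eta [Heta H]].
  rewrite (H x (ex_intro _ x (conj Hx (eq_ind_r (fun z => z < eta) Heta (vdist_refl N x)))) 0 0). ring.
  - split. intros; apply vnorm_nonneg. intros e He. exists x. split. apply Hx. rewrite vdist_refl; lra.
  - split. intros; apply vnorm_nonneg. intros e He. destruct (proj1 Hx e He) as [y [Hy1 Hy2]]. exists y; split; auto; lra.
Qed.

Lemma pos_Omega N (Omega : vec -> Prop) (delta : vec -> R)
  (Hb0 : forall x, boundary N Omega x -> delta x = 0)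
  (Hdelta_neg : forall x, ~ closure N Omega x -> delta x < 0) :
  forall x, 0 < delta x -> Omega x.
Proof. intros x Hx. destruct (classic (Omega x)) as [H|H]; auto.
  destruct (classic (closure N Omega x)) as [Hc|Hc].
  - rewrite (Hb0 x (conj Hc H)) in Hx; lra.
  - specialize (Hdelta_neg x Hc); lra. Qed.

Lemma zk_deriv rho rp (k : nat) z0 : (forall t, derivable_pt_lim rho t (rp t)) ->
  derivable_pt_lim (fun z => 1 - rho (INR k * z)) z0 (- (rp (INR k * z0) * INR k)).
Proof. intros Hd. replace (- (rp (INR k * z0) * INR k)) with (0 - rp (INR k * z0) * INR k) by ring.
  apply (derivable_pt_lim_minus (fun _ => 1) (fun z => rho (INR k * z))). apply derivable_pt_lim_const.
  apply (derivable_pt_lim_comp (fun z => INR k * z) rho). 2: apply Hd.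
  assert (H := derivable_pt_lim_mult (fun _ => INR k) (fun z => z) z0 0 1 (derivable_pt_lim_const _ _) (derivable_pt_lim_id _)).
  cbv beta in H. replace (0 * z0 + INR k * 1) with (INR k) in H by ring. exact H.
Qed.

Lemma Uk_dot N rho rp delta u k x gu0 Dd g v :
  (forall t, derivable_pt_lim rho t (rp t)) ->
  Frechet N u x gu0 -> Frechet N delta x Dd -> Frechet N (Uk rho delta u k) x g ->
  dot N g v = (1 - rho (INR k * delta x)) * dot N gu0 v + u x * (- (rp (INR k * delta x) * INR k)) * dot N Dd v.
Proof. intros Hr Hu Hd Hg.
  assert (Hc := Frechet_comp N delta x Dd _ _ Hd (zk_deriv rho rp k (delta x) Hr)).
  assert (Hm := Frechet_mul N u _ x gu0 _ Hu Hc).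
  rewrite (Frechet_dot_unique N _ x g _ v Hg Hm). rewrite dot_add_l, !dot_scal_l. ring. Qed.

Lemma psi_frechet N (Omega : vec -> Prop) delta u psi s x gu0 Dd :
  is_open N Omega -> (forall y, Omega y -> 0 < delta y) ->
  (forall y, Omega y -> psi y = u y / Rpower (delta y) s) ->
  Omega x -> Frechet N u x gu0 -> Frechet N delta x Dd ->
  Frechet N psi x (vadd (vscal (Rpower (delta x) (- s)) gu0)
                        (vscal (u x) (vscal ((- s) * Rpower (delta x) (- s - 1)) Dd))).
Proof. intros Ho Hpos Hpsi Hx Hu Hd.
  apply (Frechet_local N psi (fun y => u y * Rpower (delta y) (- s))).
  { destruct (Ho x Hx) as [r [Hr Hy]]. exists r; split; auto. intros y Hyr.
    rewrite Hpsi by auto. rewrite Rpower_Ropp. reflexivity. }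
  apply (Frechet_mul N u (fun y => Rpower (delta y) (- s))); auto.
  apply (Frechet_comp N delta x Dd (fun z => Rpower z (- s))); auto.
  replace (- s - 1) with (- s - 1) by ring. apply derivable_pt_lim_power. auto.
Qed.

Lemma Un_cv_event u w l : (exists K0, forall k, (K0 <= k)%nat -> u k = w k) -> Un_cv w l -> Un_cv u l.
Proof. intros [K0 HK] Hw eps He. destruct (Hw eps He) as [n0 Hn0]. exists (max K0 n0).
  intros n Hn. rewrite HK by lia. apply Hn0; lia. Qed.

Lemma Un_cv_squeeze u w C l : (exists K0, forall k, (K0 <= k)%nat -> Rabs (u k - l) <= C * w k) -> Un_cv w 0 -> Un_cv u l.
Proof. intros [K0 HK] Hw eps He.
  destruct (Hw (eps / (Rabs C + 1))) as [n0 Hn0]. { apply Rdiv_lt_0_compat; auto. assert (H:=Rabs_pos C); lra. }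
  exists (max K0 n0). intros n Hn. specialize (HK n ltac:(lia)). specialize (Hn0 n ltac:(lia)).
  unfold R_dist in *. rewrite Rminus_0_r in Hn0. eapply Rle_lt_trans; [apply HK|].
  assert (HC := Rabs_pos C). assert (Hw1 : Rabs (w n) < eps / (Rabs C + 1)) by auto.
  apply Rle_lt_trans with (Rabs C * Rabs (w n)).
  { rewrite <- Rabs_mult. apply Rle_abs. }
  apply Rle_lt_trans with ((Rabs C + 1) * Rabs (w n)). { assert (H := Rabs_pos (w n)). nra. }
  apply (Rmult_lt_compat_l (Rabs C + 1)) in Hw1; [|lra]. replace ((Rabs C + 1) * (eps / (Rabs C + 1))) with eps in Hw1 by (field; lra). auto. Qed.

Lemma Un_cv_dot N a b la lb : (forall i, (i < N)%nat -> Un_cv (fun n => a n i) (la i)) ->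
  (forall i, (i < N)%nat -> Un_cv (fun n => b n i) (lb i)) ->
  Un_cv (fun n => dot N (a n) (b n)) (dot N la lb).
Proof. unfold dot. induction N; intros Ha Hb; simpl.
  - intros eps He; exists O; intros; unfold R_dist; rewrite Rminus_diag, Rabs_R0; auto.
  - apply CV_plus. apply IHN; intros; [apply Ha|apply Hb]; lia.
    apply (CV_mult (fun n => a n N) (fun n => b n N)); [apply Ha|apply Hb]; lia. Qed.

Lemma inv_INR_cv0 r : Un_cv (fun k => r / INR k) 0.
Proof. apply (Un_cv_event _ (fun k => r * Rpower (INR k) (- (1)))).
  - exists 1%nat. intros k Hk. rewrite Rpower_Ropp, Rpower_1. reflexivity.
    apply lt_0_INR; lia.
  - replace 0 with (r * 0) by ring. apply CV_mult. intros eps He; exists O; intros; unfold R_dist; rewrite Rminus_diag, Rabs_R0; auto.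
    apply (INR_pow_cv0 1); lra. Qed.

Lemma cont_seq N S F p (y : nat -> vec) : contv_on N S F -> S p ->
  (exists K0, forall k, (K0 <= k)%nat -> S (y k)) -> Un_cv (fun k => vdist N (y k) p) 0 ->
  forall i, (i < N)%nat -> Un_cv (fun k => F (y k) i) (F p i).
Proof. intros HF Hp [K0 HK] Hy i Hi eps He. destruct (HF p Hp eps He) as [d [Hd Hc]].
  destruct (Hy d Hd) as [n0 Hn0]. exists (max K0 n0). intros n Hn. unfold R_dist.
  specialize (Hn0 n ltac:(lia)). unfold R_dist in Hn0. rewrite Rminus_0_r, Rabs_right in Hn0 by (apply Rle_ge, vnorm_nonneg).
  specialize (Hc (y n) (HK n ltac:(lia)) Hn0). eapply Rle_lt_trans; [|apply Hc].
  apply (coord_le_vnorm N (vsub (F (y n)) (F p)) i Hi). Qed.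

Lemma ppow_scal t nv a : 0 < t -> 0 <= nv -> ppow (t * nv) a <= Rpower t a * Rpower nv a.
Proof. intros Ht Hnv. unfold ppow. destruct (Rlt_dec 0 (t * nv)).
  - rewrite Rpower_mult_distr; [lra|auto|]. destruct Hnv; auto. subst; lra.
  - assert (H1 := Rpower_pos t a). assert (H2 := Rpower_pos nv a). nra. Qed.

Lemma key_identity k d r s du dd psix ux rhor rpr P dg :
  0 < k -> 0 < d -> r = k * d ->
  P = Rpower d (- s) * du + ux * ((- s) * Rpower d (- s - 1) * dd) ->
  ux = psix * Rpower d s ->
  dg = (1 - rhor) * du + ux * (- (rpr * k)) * dd ->
  Rpower k (s - 1) * dg = (1 - rhor) * Rpower r (s - 1) * d * P +
     (s * Rpower r (s - 1) * (1 - rhor) + Rpower r s * (- rpr)) * psix * dd.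
Proof. intros Hk Hd Hr HP Hu Hg.
  assert (E1 : Rpower d (- s) = / Rpower d s) by apply Rpower_Ropp.
  assert (Em1 : forall x, 0 < x -> Rpower x (- (1)) = / x) by (intros; rewrite Rpower_Ropp, Rpower_1; auto).
  assert (E2 : Rpower d (- s - 1) = / Rpower d s * / d).
  { unfold Rminus. rewrite Rpower_plus, E1, Em1; auto. }
  assert (E3 : Rpower d (s - 1) = Rpower d s * / d).
  { unfold Rminus. rewrite Rpower_plus, Em1; auto. }
  assert (E4 : Rpower k s = Rpower k (s - 1) * k).
  { replace s with ((s - 1) + 1) at 1 by ring. rewrite Rpower_plus, Rpower_1; auto. }
  assert (E5 : Rpower r (s - 1) = Rpower k (s - 1) * Rpower d (s - 1)) by (rewrite Hr, Rpower_mult_distr; auto).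
  assert (E6 : Rpower r s = Rpower k s * Rpower d s) by (rewrite Hr, Rpower_mult_distr; auto).
  rewrite E6, E5, E4, E3. rewrite E2, E1 in HP.
  assert (Hb := Rpower_pos d s). subst. field. split; lra.
Qed.

Theorem lemma6p1
  (N : nat) (HN : (0 < N)%nat)
  (* the domain *)
  (Omega : vec -> Prop)
  (HOopen : is_open N Omega) (HObdd : is_bounded N Omega)
  (HOC11 : C11_domain N Omega)
  (* the fixed function delta *)
  (delta : vec -> R) (Hdelta11 : C11 N delta)
  (Hdelta_sd : exists eta, 0 < eta /\ forall x,
      (exists sg, boundary N Omega sg /\ vdist N x sg < eta) ->
      forall d1 d2, IsInfDist N (fun y => ~ Omega y) x d1 ->
                    IsInfDist N Omega x d2 -> delta x = d1 - d2)
  (Hdelta_pos : forall x, Omega x -> 0 < delta x)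
  (Hdelta_neg : forall x, ~ closure N Omega x -> delta x < 0)
  (* interior unit normal nu = grad delta on the boundary *)
  (nu : vec -> vec)
  (Hnu : forall sg, boundary N Omega sg -> Frechet N delta sg (nu sg))
  (* epsilon_Omega and the tubular map Psi *)
  (epsO : R) (HepsO : 0 < epsO)
  (HPsi_delta : forall sg r, boundary N Omega sg -> Rabs r < epsO ->
      delta (Psi nu sg r) = r)
  (HPsi_onto : forall x, Rabs (delta x) < epsO ->
      exists sg r, boundary N Omega sg /\ Rabs r < epsO /\
                   vdist N x (Psi nu sg r) = 0)
  (HPsi_biLip : exists L, 0 < L /\ forall sg sg' r r',
      boundary N Omega sg -> boundary N Omega sg' ->
      Rabs r < epsO -> Rabs r' < epsO ->
      vdist N (Psi nu sg r) (Psi nu sg' r') <= L * (vdist N sg sg' + Rabs (r - r')) /\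
      vdist N sg sg' + Rabs (r - r') <= L * vdist N (Psi nu sg r) (Psi nu sg' r'))
  (* the cut-off rho *)
  (rho : R -> R) (Hrho_smooth : smooth rho)
  (Hrho_supp : exists a, 0 < a < 2 /\ forall t, a < Rabs t -> rho t = 0)
  (Hrho_bnd : forall t, 0 <= rho t <= 1)
  (Hrho_one : forall t, -1 < t < 1 -> rho t = 1)
  (* data *)
  (s : R) (Hs : 0 < s < 1)
  (X : vec -> vec) (HX : contv_on N (closure N Omega) X)
  (u : vec -> R)
  (Hu_Cs : exists K, forall x y, closure N Omega x -> closure N Omega y ->
      Rabs (u x - u y) <= K * ppow (vdist N x y) s)
  (Hu_C1 : exists gu : vec -> vec,
      (forall x, Omega x -> Frechet N u x (gu x)) /\ contv_on N Omega gu)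
  (Hu_out : forall x, ~ Omega x -> u x = 0)
  (psi : vec -> R)
  (Hpsi_def : forall x, Omega x -> psi x = u x / Rpower (delta x) s)
  (alpha c : R) (Halpha : 0 < alpha < 1) (Hc : 0 < c)
  (Hpsi_Calpha : exists A B, A + B <= c /\
      (forall x, closure N Omega x -> Rabs (psi x) <= A) /\
      (forall x y, closure N Omega x -> closure N Omega y ->
         Rabs (psi x - psi y) <= B * ppow (vdist N x y) alpha))
  (Hpsi_grad : forall x g, Omega x -> Frechet N psi x g ->
      vnorm N g <= c * Rpower (delta x) (alpha - 1)) :
  (exists C, 0 < C /\
     forall (k : nat) sg r g, (1 <= k)%nat -> boundary N Omega sg ->
       0 < r < INR k * epsO ->
       Frechet N (Uk rho delta u k) (Psi nu sg (r / INR k)) g ->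
       Rpower (INR k) (s - 1) * Rabs (dot N g (X (Psi nu sg (r / INR k))))
         <= C * (Rpower r (s - 1) + Rpower r (s - 1 + alpha)))
  /\
  (forall sg r, boundary N Omega sg -> 0 < r ->
     forall l, derivable_pt_lim (hfun s rho) r l ->
     forall G : nat -> vec,
       (forall k, (1 <= k)%nat -> r < INR k * epsO ->
          Frechet N (Uk rho delta u k) (Psi nu sg (r / INR k)) (G k)) ->
       Un_cv (fun k => Rpower (INR k) (s - 1) *
                       dot N (G k) (X (Psi nu sg (r / INR k))))
             (l * psi sg * dot N (X sg) (nu sg))).
Proof.
  destruct Hdelta11 as [Dd [Ld [HDd HLd]]].
  assert (Hb0 := boundary_delta0 N Omega delta Hdelta_sd).
  assert (HposO := pos_Omega N Omega delta Hb0 Hdelta_neg).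
  destruct Hu_C1 as [gu [Hgu _]].
  destruct (rho_deriv rho Hrho_smooth Hrho_supp) as [rp [Hrp [[Mr [HMr HMrb]] Hrp0]]].
  destruct (bounded_cont N Omega X HObdd HX) as [BX [HBX HBXb]].
  destruct Hpsi_Calpha as [A [B [HAB [HA HB]]]].
  assert (HOcl : forall x, Omega x -> closure N Omega x).
  { intros x Hx e He. exists x. split; auto. rewrite vdist_refl; auto. }
  assert (HBD : exists BD, 0 <= BD /\ forall x, Omega x -> L1 N (Dd x) <= BD).
  { destruct HObdd as [M HM]. set (z0 := fun _ : nat => 0).
    exists (L1 N (Dd z0) + INR N * (Rabs Ld * Rabs M)). split.
    { assert (H1 := L1_nonneg N (Dd z0)). assert (H2 := pos_INR N).
      assert (H3 := Rabs_pos Ld). assert (H4 := Rabs_pos M). apply Rplus_le_le_0_compat; [auto|apply Rmult_le_pos; [auto|apply Rmult_le_pos; auto]]. }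
    intros x Hx. eapply Rle_trans; [apply (L1_sub N (Dd x) (Dd z0))|].
    apply Rplus_le_compat_l. eapply Rle_trans; [apply L1_le_vnorm|].
    apply Rmult_le_compat_l; [apply pos_INR|]. eapply Rle_trans; [apply HLd|].
    assert (Hv : vdist N x z0 = vnorm N x) by (apply vnorm_ext; intros; unfold vsub, z0; ring).
    rewrite Hv. specialize (HM x Hx). assert (H0 := vnorm_nonneg N x).
    assert (Ld <= Rabs Ld) by apply Rle_abs. assert (M <= Rabs M) by apply Rle_abs.
    assert (H3 := Rabs_pos Ld). nra. }
  destruct HBD as [BD [HBD HBDb]].
  set (gp := fun x => vadd (vscal (Rpower (delta x) (- s)) (gu x))
                  (vscal (u x) (vscal ((- s) * Rpower (delta x) (- s - 1)) (Dd x)))).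
  set (hp := fun r => s * Rpower r (s - 1) * (1 - rho r) + Rpower r s * (- rp r)).
  assert (Hform : forall (k : nat) sg d g v, (1 <= k)%nat -> boundary N Omega sg -> 0 < d < epsO ->
     Frechet N (Uk rho delta u k) (Psi nu sg d) g ->
     let x := Psi nu sg d in let r := INR k * d in
     Omega x /\ delta x = d /\
     Rpower (INR k) (s - 1) * dot N g v =
       (1 - rho r) * Rpower r (s - 1) * d * dot N (gp x) v + hp r * psi x * dot N (Dd x) v).
  { intros k sg d g v Hk Hsg Hd Hg x r.
    assert (Hdx : delta x = d) by (apply HPsi_delta; auto; rewrite Rabs_right; lra).
    assert (Hx : Omega x) by (apply HposO; lra).
    split; auto. split; auto.
    assert (HkR : 0 < INR k) by (apply lt_0_INR; lia).
    apply (key_identity (INR k) d r s (dot N (gu x) v) (dot N (Dd x) v) (psi x) (u x) (rho r) (rp r)); auto; try lra.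
    - unfold gp. rewrite dot_add_l, !dot_scal_l. rewrite Hdx. ring.
    - rewrite Hpsi_def by auto. rewrite Hdx. field. apply Rgt_not_eq, Rpower_pos.
    - unfold r. rewrite <- Hdx. apply Uk_dot; auto. }

  assert (Hrho1 : forall t, Rabs (1 - rho t) <= 1).
  { intros t. destruct (Hrho_bnd t). rewrite Rabs_right; lra. }
  assert (Hhp : forall r, 0 < r -> Rabs (hp r) <= (s + 2 * Mr) * Rpower r (s - 1)).
  { intros r Hr. unfold hp. assert (Hp1 := Rpower_pos r (s - 1)).
    assert (Ers : Rpower r s = Rpower r (s - 1) * r).
    { replace s with ((s - 1) + 1) at 1 by ring. rewrite Rpower_plus, Rpower_1; auto. }
    eapply Rle_trans; [apply Rabs_triang|]. rewrite !Rabs_mult.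
    rewrite (Rabs_right s) by lra. rewrite (Rabs_right (Rpower r (s - 1))) by lra.
    rewrite (Rabs_right (Rpower r s)) by (left; apply Rpower_pos). rewrite Rabs_Ropp.
    assert (T1 : s * Rpower r (s - 1) * Rabs (1 - rho r) <= s * Rpower r (s - 1)).
    { assert (H := Hrho1 r). assert (0 <= s * Rpower r (s - 1)) by nra. nra. }
    assert (T2 : Rpower r s * Rabs (rp r) <= 2 * Mr * Rpower r (s - 1)).
    { destruct (Rle_lt_dec 2 r) as [H2|H2].
      - rewrite Hrp0 by (rewrite Rabs_right; lra). rewrite Rabs_R0. nra.
      - rewrite Ers. assert (H := HMrb r). assert (H' := Rabs_pos (rp r)).
        assert (Rpower r (s - 1) * r <= Rpower r (s - 1) * 2) by nra. nra. }
    lra. }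
  split.
  - exists (c * BX + (s + 2 * Mr) * Rabs A * BD * BX + 1).
    assert (HA0 := Rabs_pos A).
    assert (HC0 : 0 <= c * BX + (s + 2 * Mr) * Rabs A * BD * BX).
    { apply Rplus_le_le_0_compat. nra. repeat apply Rmult_le_pos; lra. }
    split; [lra|].
    intros k sg r g Hk Hsg Hr Hg.
    assert (HkR : 1 <= INR k) by (apply (le_INR 1); auto).
    set (d := r / INR k).
    assert (Hd : 0 < d < epsO).
    { unfold d. split. apply Rdiv_lt_0_compat; lra.
      apply Rmult_lt_reg_r with (INR k); [lra|]. replace (r / INR k * INR k) with r by (field; lra). lra. }
    assert (Er : INR k * d = r) by (unfold d; field; lra).
    assert (Hdr : d <= r).
    { unfold d. apply Rmult_le_reg_r with (INR k); [lra|]. replace (r / INR k * INR k) with r by (field; lra). nra. }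
    pose proof (Hform k sg d g (X (Psi nu sg d)) Hk Hsg Hd Hg) as HF. cbv zeta in HF.
    destruct HF as [Hx [Hdx Heq]]. rewrite Er in Heq.
    set (x := Psi nu sg d) in *. set (v := X x) in *.
    rewrite <- (Rabs_right (Rpower (INR k) (s - 1))) by (left; apply Rpower_pos).
    rewrite <- Rabs_mult, Heq.
    assert (F1 : Rabs (dot N (gp x) v) <= c * Rpower d (alpha - 1) * BX).
    { eapply Rle_trans; [apply dot_bound|].
      assert (Hgp : vnorm N (gp x) <= c * Rpower d (alpha - 1)).
      { rewrite <- Hdx. apply Hpsi_grad; auto. unfold gp. apply psi_frechet with (Omega := Omega); auto. }
      assert (HL := HBXb x (HOcl x Hx)). assert (H0 := vnorm_nonneg N (gp x)). assert (H1 := L1_nonneg N v).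
      apply Rmult_le_compat; auto. }
    assert (F2 : Rabs (dot N (Dd x) v) <= BD * BX).
    { eapply Rle_trans; [apply dot_bound|]. assert (HL := HBXb x (HOcl x Hx)).
      apply Rmult_le_compat; [apply vnorm_nonneg|apply L1_nonneg| |auto].
      eapply Rle_trans; [apply vnorm_le_L1|auto]. }
    assert (F3 : Rabs (psi x) <= Rabs A) by (eapply Rle_trans; [apply HA; auto|apply Rle_abs]).
    assert (F6 : d * Rpower d (alpha - 1) <= Rpower r alpha).
    { replace (d * Rpower d (alpha - 1)) with (Rpower d alpha).
      apply Rpower_le_base; lra.
      replace alpha with (1 + (alpha - 1)) at 1 by ring. rewrite Rpower_plus, Rpower_1; lra. }
    assert (F7 : Rpower r (s - 1) * Rpower r alpha = Rpower r (s - 1 + alpha)) by (rewrite Rpower_plus; auto).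
    assert (Hps := Rpower_pos r (s - 1)). assert (Hpa := Rpower_pos r (s - 1 + alpha)).
    assert (Hpd := Rpower_pos d (alpha - 1)).
    eapply Rle_trans; [apply Rabs_triang|]. rewrite !Rabs_mult.
    rewrite (Rabs_right (Rpower r (s - 1))) by lra. rewrite (Rabs_right d) by lra.
    assert (T1 : Rabs (1 - rho r) * Rpower r (s - 1) * d * Rabs (dot N (gp x) v) <= c * BX * Rpower r (s - 1 + alpha)).
    { assert (H1 := Hrho1 r). assert (H2 := Rabs_pos (1 - rho r)). assert (H3 := Rabs_pos (dot N (gp x) v)).
      apply Rle_trans with (Rpower r (s - 1) * d * (c * Rpower d (alpha - 1) * BX)).
      { apply Rle_trans with (1 * Rpower r (s - 1) * d * Rabs (dot N (gp x) v)).
        - repeat apply Rmult_le_compat_r; lra.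
        - rewrite Rmult_1_l. apply Rmult_le_compat_l; [nra|auto]. }
      rewrite <- F7. replace (Rpower r (s - 1) * d * (c * Rpower d (alpha - 1) * BX))
        with (c * BX * Rpower r (s - 1) * (d * Rpower d (alpha - 1))) by ring.
      apply Rle_trans with (c * BX * Rpower r (s - 1) * Rpower r alpha).
      { apply Rmult_le_compat_l; auto. assert (0 <= c * BX) by nra. nra. }
      right; ring. }
    assert (T2 : Rabs (hp r) * Rabs (psi x) * Rabs (dot N (Dd x) v) <= (s + 2 * Mr) * Rabs A * BD * BX * Rpower r (s - 1)).
    { assert (H1 := Hhp r (proj1 Hr)). assert (H2 := Rabs_pos (hp r)). assert (H3 := Rabs_pos (psi x)).
      assert (H4 := Rabs_pos (dot N (Dd x) v)).
      apply Rle_trans with ((s + 2 * Mr) * Rpower r (s - 1) * Rabs A * (BD * BX)).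
      - apply Rmult_le_compat; auto. nra. apply Rmult_le_compat; auto.
      - right; ring. }
    assert (0 <= c * BX * Rpower r (s - 1)) by (repeat apply Rmult_le_pos; lra).
    assert (0 <= (s + 2 * Mr) * Rabs A * BD * BX * Rpower r (s - 1 + alpha)).
    { repeat apply Rmult_le_pos; lra. }
    eapply Rle_trans; [apply Rplus_le_compat; [apply T1|apply T2]|].
    nra.
  - intros sg r Hsg Hr l Hl G HG.
    assert (El : l = hp r) by (eapply uniqueness_limite; [apply Hl| apply hfun_deriv; auto]).
    rewrite El, dot_comm.
    destruct (archimed (r / epsO)) as [Hup _].
    assert (Hz : (0 <= up (r / epsO))%Z).
    { apply le_IZR. assert (0 < r / epsO) by (apply Rdiv_lt_0_compat; lra). simpl; lra. }
    set (K0 := S (Z.to_nat (up (r / epsO)))).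
    assert (HK0 : forall k, (K0 <= k)%nat -> (1 <= k)%nat /\ r < INR k * epsO).
    { intros k Hk. split. unfold K0 in Hk; lia.
      assert (IZR (up (r / epsO)) <= INR k).
      { rewrite <- (Z2Nat.id _ Hz), <- INR_IZR_INZ. apply le_INR. unfold K0 in Hk; lia. }
      assert (r / epsO < INR k) by lra.
      apply (Rmult_lt_compat_r epsO) in H0; auto. replace (r / epsO * epsO) with r in H0 by (field; lra). lra. }
    set (d := fun k : nat => r / INR k).
    set (x := fun k => Psi nu sg (d k)).
    set (nv := vnorm N (nu sg)). assert (Hnv : 0 <= nv) by apply vnorm_nonneg.
    assert (Hd1 : forall k, (1 <= k)%nat -> 0 < d k /\ INR k * d k = r /\ d k <= r).
    { intros k Hk. assert (HkR : 1 <= INR k) by (apply (le_INR 1); auto). unfold d. split; [|split].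
      apply Rdiv_lt_0_compat; lra. field; lra.
      apply Rmult_le_reg_r with (INR k); [lra|]. replace (r / INR k * INR k) with r by (field; lra). nra. }
    assert (HdK : forall k, (K0 <= k)%nat -> 0 < d k < epsO).
    { intros k Hk. destruct (HK0 k Hk) as [Hk1 Hk2]. destruct (Hd1 k Hk1) as [H1 [H2 H3]]. split; auto.
      assert (HkR : 1 <= INR k) by (apply (le_INR 1); auto).
      apply Rmult_lt_reg_l with (INR k); lra. }
    assert (Hdpow : forall k, (1 <= k)%nat -> Rpower (d k) alpha = Rpower r alpha * Rpower (INR k) (- alpha)).
    { intros k Hk. assert (HkR : 1 <= INR k) by (apply (le_INR 1); auto). unfold d.
      rewrite Rpower_div, Rpower_Ropp by lra. reflexivity. }
    assert (Hvd : forall k, (1 <= k)%nat -> vdist N (x k) sg = d k * nv).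
    { intros k Hk. unfold x, Psi. rewrite vdist_dir. rewrite Rabs_right; auto. left; apply Hd1; auto. }
    assert (HxO : forall k, (K0 <= k)%nat -> Omega (x k)).
    { intros k Hk. unfold x. apply HposO. destruct (HdK k Hk).
      rewrite HPsi_delta; auto. rewrite Rabs_right; lra. }
    apply (Un_cv_event _ (fun k => (1 - rho r) * Rpower r (s - 1) * d k * dot N (gp (x k)) (X (x k)) +
                                   hp r * psi (x k) * dot N (Dd (x k)) (X (x k)))).
    { exists K0. intros k Hk. destruct (HK0 k Hk) as [Hk1 Hk2].
      pose proof (Hform k sg (d k) (G k) (X (x k)) Hk1 Hsg (HdK k Hk) (HG k Hk1 Hk2)) as HF.
      cbv zeta in HF. destruct HF as [_ [_ Heq]]. destruct (Hd1 k Hk1) as [_ [Er _]].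
      rewrite Er in Heq. exact Heq. }
    replace (hp r * psi sg * dot N (nu sg) (X sg)) with (0 + hp r * psi sg * dot N (nu sg) (X sg)) by ring.
    apply CV_plus.
    + apply (Un_cv_squeeze _ (fun k => Rpower (INR k) (- alpha)) (c * BX * Rpower r (s - 1) * Rpower r alpha)).
      2: apply INR_pow_cv0; lra.
      exists K0. intros k Hk. rewrite Rminus_0_r. destruct (HK0 k Hk) as [Hk1 _].
      destruct (Hd1 k Hk1) as [Hdk [_ _]]. assert (Hx := HxO k Hk).
      assert (Hdx : delta (x k) = d k) by (apply HPsi_delta; auto; destruct (HdK k Hk); rewrite Rabs_right; lra).
      assert (F1 : Rabs (dot N (gp (x k)) (X (x k))) <= c * Rpower (d k) (alpha - 1) * BX).
      { eapply Rle_trans; [apply dot_bound|].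
        assert (Hgp : vnorm N (gp (x k)) <= c * Rpower (d k) (alpha - 1)).
        { rewrite <- Hdx. apply Hpsi_grad; auto. unfold gp. apply psi_frechet with (Omega := Omega); auto. }
        assert (HL := HBXb (x k) (HOcl _ Hx)). assert (H0 := vnorm_nonneg N (gp (x k))). assert (H1 := L1_nonneg N (X (x k))).
        apply Rmult_le_compat; auto. }
      assert (F6 : d k * Rpower (d k) (alpha - 1) = Rpower (d k) alpha).
      { replace alpha with (1 + (alpha - 1)) at 2 by ring. rewrite Rpower_plus, Rpower_1; lra. }
      rewrite !Rabs_mult. rewrite (Rabs_right (Rpower r (s - 1))) by (left; apply Rpower_pos).
      rewrite (Rabs_right (d k)) by lra.
      assert (H1 := Hrho1 r). assert (H2 := Rabs_pos (1 - rho r)). assert (H3 := Rabs_pos (dot N (gp (x k)) (X (x k)))).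
      assert (Hps := Rpower_pos r (s - 1)). assert (Hpd := Rpower_pos (d k) (alpha - 1)).
      apply Rle_trans with (1 * Rpower r (s - 1) * d k * (c * Rpower (d k) (alpha - 1) * BX)).
      { apply Rmult_le_compat; [apply Rmult_le_pos; [apply Rmult_le_pos|]; lra | lra | apply Rmult_le_compat_r; [lra|apply Rmult_le_compat_r; lra] | exact F1]. }
      replace (1 * Rpower r (s - 1) * d k * (c * Rpower (d k) (alpha - 1) * BX)) with
        (c * BX * Rpower r (s - 1) * (d k * Rpower (d k) (alpha - 1))) by ring.
      rewrite F6, Hdpow by auto. right; ring.
    + apply CV_mult.
      * apply (CV_mult (fun _ => hp r)). { intros eps He; exists O; intros; unfold R_dist; rewrite Rminus_diag, Rabs_R0; auto. }
        apply (Un_cv_squeeze _ (fun k => Rpower (INR k) (- alpha)) (Rabs B * Rpower nv alpha * Rpower r alpha)).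
        2: apply INR_pow_cv0; lra.
        exists K0. intros k Hk. destruct (HK0 k Hk) as [Hk1 _]. destruct (Hd1 k Hk1) as [Hdk _].
        eapply Rle_trans; [apply HB; [apply HOcl, HxO; auto| apply Hsg]|].
        rewrite Hvd by auto.
        assert (Hpp : 0 <= ppow (d k * nv) alpha).
        { unfold ppow. destruct (Rlt_dec 0 (d k * nv)); [left; apply Rpower_pos|lra]. }
        apply Rle_trans with (Rabs B * ppow (d k * nv) alpha).
        { apply Rmult_le_compat_r; auto. apply Rle_abs. }
        apply Rle_trans with (Rabs B * (Rpower (d k) alpha * Rpower nv alpha)).
        { apply Rmult_le_compat_l; [apply Rabs_pos|apply ppow_scal; auto]. }
        rewrite Hdpow by auto. right; ring.
      * apply Un_cv_dot.
        -- intros i Hi. apply (Un_cv_squeeze _ (fun k => r / INR k) (Ld * nv)). 2: apply inv_INR_cv0.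
           exists 1%nat. intros k Hk.
           rewrite <- (Frechet_coord_unique N delta sg (Dd sg) (nu sg) i Hi (HDd sg) (Hnu sg Hsg)).
           eapply Rle_trans; [apply (coord_le_vnorm N (vsub (Dd (x k)) (Dd sg)) i Hi)|].
           eapply Rle_trans; [apply HLd|]. rewrite Hvd by auto. fold (d k). right; ring.
        -- apply (cont_seq N (closure N Omega)); auto. apply Hsg.
           exists K0; intros k Hk; apply HOcl, HxO; auto.
           apply (Un_cv_squeeze _ d nv). 2: apply inv_INR_cv0.
           exists 1%nat. intros k Hk. rewrite Rminus_0_r, Hvd by auto.
           rewrite Rabs_right. right; ring. destruct (Hd1 k Hk). apply Rle_ge, Rmult_le_pos; lra.
Qed.
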